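(* The set $\{\gamma(w): w \text{ a nanoword over }\alpha\}$ is equal to the commutator subgroup $[\Pi,\Pi]$ of $\Pi$.
   Context: Fix a set $\alpha$ with an involution $\tau$. A nanoword over $\alpha$ is a pair $(\mathcal A,w)$ with $\mathcal A$ a finite set with a map $A\mapsto|A|\in\alpha$ and $w:\{1,\dots,n\}\to\mathcal A$ a word in which each letter of $\mathcal A$ occurs exactly twice. Let $\Pi$ be the group with generators $\{z_a\}_{a\in\alpha}$ and defining relations $z_az_{\tau(a)}=1$ for $a\in\alpha$. For a nanoword $(\mathcal A,w)$ of length $n$ and $i=1,\dots,n$ set $\gamma_i=z_{|w(i)|}$ if position $i$ is the first occurrence of the letter $w(i)$ in $w$, and $\gamma_i=z_{\tau(|w(i)|)}=z_{|w(i)|}^{-1}$ otherwise; put $\gamma(w)=\gamma_1\cdots\gamma_n\in\Pi$ (with $\gamma$ of the empty nanoword equal to $1$). *)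

(* Defs.v *)
From mathcomp Require Import all_boot.
Set Implicit Arguments. Unset Strict Implicit. Unset Printing Implicit Defensive.

(* The group Pi = < z_a (a in alpha) | z_a z_(tau a) = 1 > is modelled as the
   free monoid on alpha (words [seq alpha]) modulo the congruence generated by
   the relations  [:: a; tau a] = [::]  (for tau an involution this monoid
   quotient is the group with the given presentation; the inverse of a word w
   is [rev (map tau w)]). The letter a stands for the generator z_a. *)

Section Pi.
Variables (alpha : Type) (tau : alpha -> alpha).

Inductive pi_step : seq alpha -> seq alpha -> Prop :=
| PiStep (u v : seq alpha) (a : alpha) : pi_step (u ++ [:: a; tau a] ++ v) (u ++ v).

Inductive pi_eq : seq alpha -> seq alpha -> Prop :=
| PiRefl u : pi_eq u u
| PiStepE u v : pi_step u v -> pi_eq u v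
| PiSym u v : pi_eq u v -> pi_eq v u
| PiTrans u v w : pi_eq u v -> pi_eq v w -> pi_eq u w.

Definition pi_inv (w : seq alpha) : seq alpha := rev (map tau w).

Definition pi_comm (x y : seq alpha) : seq alpha :=
  pi_inv x ++ pi_inv y ++ x ++ y.

Inductive in_commutator_subgroup : seq alpha -> Prop :=
| CS_comm x y : in_commutator_subgroup (pi_comm x y)
| CS_one : in_commutator_subgroup [::]
| CS_mul u v : in_commutator_subgroup u -> in_commutator_subgroup v ->
               in_commutator_subgroup (u ++ v)
| CS_inv u : in_commutator_subgroup u -> in_commutator_subgroup (pi_inv u)
| CS_eq u v : pi_eq u v -> in_commutator_subgroup u -> in_commutator_subgroup v.

End Pi.

(* Nanowords: a finite alphabet A (a finType) with a projection lab : A -> alpha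
   and a word w : seq A in which each letter of A occurs exactly twice. *)
Definition is_nanoword (A : finType) (w : seq A) : Prop :=
  forall x : A, count_mem x w = 2.

(* gamma(w) as a word over alpha: the i-th letter is |w(i)| at a first
   occurrence and tau |w(i)| at a second occurrence; [seen] records letters
   already read. *)
Fixpoint gamma_aux (A : eqType) (alpha : Type) (lab : A -> alpha)
    (tau : alpha -> alpha) (seen : seq A) (w : seq A) : seq alpha :=
  match w with
  | [::] => [::]
  | x :: w' => (if x \in seen then tau (lab x) else lab x)
                 :: gamma_aux lab tau (x :: seen) w'
  end.

Definition gamma (A : eqType) (alpha : Type) (lab : A -> alpha)
    (tau : alpha -> alpha) (w : seq A) : seq alpha :=
  gamma_aux lab tau [::] w.

(* Main.v *)
Require Import Defs.
From mathcomp Require Import all_boot.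

Section Helpers.
Variables (alpha : Type) (tau : alpha -> alpha).
Hypothesis tau_inv : forall a, tau (tau a) = a.

Lemma pi_step_ctx p q u v : pi_step tau u v -> pi_step tau (p ++ u ++ q) (p ++ v ++ q).
Proof.
case=> u0 v0 a.
have -> : p ++ (u0 ++ [:: a; tau a] ++ v0) ++ q = (p ++ u0) ++ [:: a; tau a] ++ (v0 ++ q).
  by rewrite !catA.
have -> : p ++ (u0 ++ v0) ++ q = (p ++ u0) ++ (v0 ++ q) by rewrite !catA.
by constructor.
Qed.

Lemma pi_eq_ctx p q u v : pi_eq tau u v -> pi_eq tau (p ++ u ++ q) (p ++ v ++ q).
Proof.
elim=> [u0|u0 v0 H|u0 v0 _ IH|u0 v0 w0 _ IH1 _ IH2].
- exact: PiRefl.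
- by apply: PiStepE; apply: pi_step_ctx.
- exact: PiSym.
- exact: PiTrans IH1 IH2.
Qed.

Lemma pi_eq_cat u u' v v' : pi_eq tau u u' -> pi_eq tau v v' ->
  pi_eq tau (u ++ v) (u' ++ v').
Proof.
move=> Hu Hv; apply: (PiTrans (v := u' ++ v)).
  by have := pi_eq_ctx [::] v _ _ Hu; rewrite /=.
by have := pi_eq_ctx u' [::] _ _ Hv; rewrite !cats0.
Qed.

Lemma pi_inv_cat u v : pi_inv tau (u ++ v) = pi_inv tau v ++ pi_inv tau u.
Proof. by rewrite /pi_inv map_cat rev_cat. Qed.

Lemma pi_invK u : pi_inv tau (pi_inv tau u) = u.
Proof.
rewrite /pi_inv map_rev revK -map_comp; rewrite -[RHS]map_id; apply: eq_map => x /=.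
by rewrite tau_inv.
Qed.

Lemma pi_step_inv u v : pi_step tau u v -> pi_step tau (pi_inv tau u) (pi_inv tau v).
Proof.
case=> u0 v0 a; rewrite !pi_inv_cat.
have -> : pi_inv tau [:: a; tau a] = [:: a; tau a] by rewrite /pi_inv /= tau_inv.
by rewrite -catA; constructor.
Qed.

Lemma pi_eq_inv u v : pi_eq tau u v -> pi_eq tau (pi_inv tau u) (pi_inv tau v).
Proof.
elim=> [u0|u0 v0 H|u0 v0 _ IH|u0 v0 w0 _ IH1 _ IH2].
- exact: PiRefl.
- by apply: PiStepE; apply: pi_step_inv.
- exact: PiSym.
- exact: PiTrans IH1 IH2.
Qed.

Lemma pi_inv_cancel u : pi_eq tau (pi_inv tau u ++ u) [::].
Proof.
elim: u => [|a u IH] /=; first exact: PiRefl.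
have -> : pi_inv tau (a :: u) = pi_inv tau u ++ [:: tau a].
  by rewrite /pi_inv /= rev_cons -cats1.
apply: (PiTrans _ IH).
apply: PiStepE.
have -> : (pi_inv tau u ++ [:: tau a]) ++ a :: u = pi_inv tau u ++ [:: tau a; tau (tau a)] ++ u.
  by rewrite tau_inv -catA.
by constructor.
Qed.

Section Gam.
Variables (A : eqType) (lab : A -> alpha).

Lemma gamma_aux_cat s u v :
  gamma_aux lab tau s (u ++ v) = gamma_aux lab tau s u ++ gamma_aux lab tau (rev u ++ s) v.
Proof.
elim: u s => [|x u IH] s //=.
by rewrite IH rev_cons cat_rcons.
Qed.

Lemma gamma_aux_eq s s' w : (forall y, y \in w -> (y \in s) = (y \in s')) ->
  gamma_aux lab tau s w = gamma_aux lab tau s' w.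
Proof.
elim: w s s' => [|x w IH] s s' H //=.
rewrite H ?mem_head //; congr (_ :: _); apply: IH => y yw.
by rewrite !in_cons H // in_cons yw orbT.
Qed.

Lemma gamma_aux_fresh s w : uniq w -> (forall y, y \in w -> y \notin s) ->
  gamma_aux lab tau s w = map lab w.
Proof.
elim: w s => [|x w IH] s //= /andP [xw uw] H.
rewrite (negbTE (H x (mem_head _ _))); congr (_ :: _); apply: IH => // y yw.
rewrite in_cons negb_or H ?in_cons ?yw ?orbT // andbT.
by apply/eqP => yx; rewrite -yx yw in xw.
Qed.

Lemma gamma_aux_seen s w : (forall y, y \in w -> y \in s) ->
  gamma_aux lab tau s w = map (fun x => tau (lab x)) w.
Proof.
elim: w s => [|x w IH] s //= H.
rewrite H ?mem_head //; congr (_ :: _); apply: IH => y yw.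
by rewrite in_cons H ?in_cons ?yw ?orbT // orbT.
Qed.
End Gam.

Lemma gamma_aux_map (A B : eqType) (f : A -> B) (lab : B -> alpha) s w :
  injective f ->
  gamma_aux lab tau (map f s) (map f w) = gamma_aux (fun x => lab (f x)) tau s w.
Proof.
move=> fi; elim: w s => [|x w IH] s //=.
by rewrite mem_map // -IH.
Qed.

Definition sum_lab (A B : Type) (la : A -> alpha) (lb : B -> alpha) (z : A + B) :=
  match z with inl a => la a | inr b => lb b end.
Arguments sum_lab {A B}.

Lemma gamma_sum (A B : eqType) (la : A -> alpha) (lb : B -> alpha) u v :
  gamma (sum_lab la lb) tau (map inl u ++ map inr v) = gamma la tau u ++ gamma lb tau v.
Proof.
rewrite /gamma gamma_aux_cat; congr (_ ++ _).
  have -> : [::] = map (@inl A B) [::] by [].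
  by rewrite gamma_aux_map //; move=> ? ? [].
rewrite (@gamma_aux_eq _ _ _ (map (@inr A B) [::])); last first.
  move=> y /mapP [b _ ->]; rewrite cats0 mem_rev /=.
  by apply/mapP => [[a _]].
by rewrite gamma_aux_map //; move=> ? ? [].
Qed.

Definition cm (p : seq alpha * seq alpha) := pi_comm tau p.1 p.2.

Lemma nano_rc (T : finType) (s1 s2 : seq T) : uniq (s2 ++ s1) ->
  (forall z, z \in s2 ++ s1) -> is_nanoword (rev (s2 ++ s1) ++ (s1 ++ s2)).
Proof.
move=> u h z; rewrite count_cat count_rev.
have e : forall s : seq T, uniq s -> (forall z, z \in s) -> count_mem z s = 1.
  by move=> s us hs; rewrite count_uniq_mem // hs.
rewrite e //.
have u' : uniq (s1 ++ s2) by rewrite uniq_catC.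
have h' : forall z, z \in s1 ++ s2 by move=> y; rewrite mem_cat orbC -mem_cat.
by rewrite e.
Qed.

Lemma comm_nano (x y : seq alpha) : exists (A : finType) (lab : A -> alpha) (w : seq A),
  is_nanoword w /\ gamma lab tau w = pi_comm tau x y.
Proof.
set tx := in_tuple x; set ty := in_tuple y.
exists ('I_(size x) + 'I_(size y))%type.
exists (sum_lab (fun i => tau (tnth tx i)) (fun j => tau (tnth ty j))).
set U1 := map (@inl 'I_(size x) 'I_(size y)) (enum 'I_(size x)).
set U2 := map (@inr 'I_(size x) 'I_(size y)) (enum 'I_(size y)).
have uU : uniq (U2 ++ U1).
  rewrite cat_uniq /U1 /U2 !map_inj_uniq ?enum_uniq; try by move=> ? ? [].
  apply/and3P; split; [by rewrite -enumT enum_uniq | | by rewrite -enumT enum_uniq].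
  apply/hasPn => z /mapP [i _ ->].
  by apply/mapP => [[j _]].
have inU z : z \in U2 ++ U1.
  case: z => [i|j]; rewrite mem_cat.
    by rewrite (map_f (@inl _ _)) ?mem_enum ?orbT.
  by rewrite (map_f (@inr _ _)) ?mem_enum.
exists (rev (U2 ++ U1) ++ (U1 ++ U2)); split.
  by apply: nano_rc.
rewrite /gamma gamma_aux_cat revK cats0.
rewrite gamma_aux_fresh ?rev_uniq //.
rewrite gamma_aux_seen; last by move=> z _; rewrite inU.
have Ey : y = map (tnth ty) (enum 'I_(size y)) := esym (map_tnth_enum ty).
have Ex : x = map (tnth tx) (enum 'I_(size x)) := esym (map_tnth_enum tx).
rewrite map_rev /pi_comm /pi_inv catA -rev_cat !map_cat; congr (rev _ ++ _).
  rewrite -!map_comp; congr (_ ++ _).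
  + rewrite [in RHS]Ey -map_comp enumT; exact: eq_map.
  + rewrite [in RHS]Ex -map_comp enumT; exact: eq_map.
rewrite -!map_comp; congr (_ ++ _).
  + rewrite [in RHS]Ex enumT; apply: eq_map => i /=; by rewrite tau_inv.
  + rewrite [in RHS]Ey enumT; apply: eq_map => i /=; by rewrite tau_inv.
Qed.

Lemma list_nano (l : seq (seq alpha * seq alpha)) :
  exists (A : finType) (lab : A -> alpha) (w : seq A),
  is_nanoword w /\ gamma lab tau w = flatten (map cm l).
Proof.
elim: l => [|p l [B [lb [v [nv gv]]]]].
  exists void, (fun z : void => match z with end), [::]; split => //; by case.
have [A [la [u [nu gu]]]] := comm_nano p.1 p.2.
exists (A + B)%type, (sum_lab la lb), (map inl u ++ map inr v); split.
  case=> [a|b]; rewrite count_cat !count_map.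
    rewrite (@eq_count _ _ pred0 _ v) ?count_pred0 ?addn0; last by move=> z.
    rewrite -(nu a); apply: eq_count => z /=.
    by apply/eqP/eqP => [[->]|->].
  rewrite (@eq_count _ _ pred0 _ u) ?count_pred0 ?add0n; last by move=> z.
  rewrite -(nv b); apply: eq_count => z /=.
  by apply/eqP/eqP => [[->]|->].
by rewrite gamma_sum gu gv.
Qed.

Lemma flatten_inv l :
  pi_inv tau (flatten (map cm l)) = flatten (map cm (rev (map (fun p => (p.2, p.1)) l))).
Proof.
elim: l => [|p l IH] //=.
rewrite pi_inv_cat IH rev_cons map_rcons flatten_rcons; congr (_ ++ _).
rewrite /cm /pi_comm /= !pi_inv_cat !pi_invK. by rewrite -!catA.
Qed.

Lemma cs_list g : in_commutator_subgroup tau g ->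
  exists l, pi_eq tau (flatten (map cm l)) g.
Proof.
elim=> [x y||u v _ [l1 H1] _ [l2 H2]|u _ [l H]|u v Huv _ [l H]].
- by exists [:: (x, y)]; rewrite /= cats0; exact: PiRefl.
- by exists [::]; exact: PiRefl.
- by exists (l1 ++ l2); rewrite map_cat flatten_cat; exact: pi_eq_cat.
- exists (rev (map (fun p => (p.2, p.1)) l)); rewrite -flatten_inv.
  exact: pi_eq_inv.
- by exists l; exact: PiTrans H Huv.
Qed.

Lemma nano_cs (A : eqType) (lab : A -> alpha) n (w : seq A) : size w < n ->
  (forall x, x \in w -> count_mem x w = 2) ->
  in_commutator_subgroup tau (gamma lab tau w).
Proof.
elim: n w => [|n IHn] w //; case: w => [|x w'] sw H.
  exact: CS_one.
have c1 : count_mem x w' = 1.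
  by have := H x (mem_head _ _); rewrite /= eqxx add1n => -[].
have xw' : x \in w' by rewrite -has_pred1 has_count c1.
case/splitPr: xw' c1 sw H => w1 w2.
rewrite count_cat /= eqxx => c1 sw H.
have [c1a c1b] : count_mem x w1 = 0 /\ count_mem x w2 = 0.
  by move: c1; rewrite /= add1n addnS => -[]; case: (count_mem x w1); case: (count_mem x w2).
have x1 : x \notin w1 by rewrite -has_pred1 has_count c1a.
have x2 : x \notin w2 by rewrite -has_pred1 has_count c1b.
rewrite /gamma /= gamma_aux_cat /= mem_cat mem_rev mem_head orbT.
set G1 := gamma_aux lab tau [:: x] w1.
set G2 := gamma_aux lab tau _ w2.
have G1E : G1 = gamma lab tau w1.
  apply: gamma_aux_eq => y yw; rewrite in_cons in_nil orbF.
  by apply/eqP => yx; rewrite -yx yw in x1.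
have G2E : G2 = gamma_aux lab tau (rev w1 ++ [::]) w2.
  apply: gamma_aux_eq => y yw; rewrite in_cons mem_cat mem_cat !mem_rev in_cons in_nil.
  have -> : (y == x) = false by apply/eqP => yx; rewrite -yx yw in x2.
  by rewrite /= orbF.
have IH : in_commutator_subgroup tau (G1 ++ G2).
  rewrite G1E G2E /gamma -gamma_aux_cat; apply: IHn.
    move: sw; rewrite /= !size_cat /=. rewrite addnS ltnS => h; exact: ltnW.
  move=> y; rewrite mem_cat => yw.
  have yx : (x == y) = false.
    by apply/eqP => xy; rewrite -xy (negbTE x1) (negbTE x2) in yw.
  have hy : y \in x :: w1 ++ x :: w2.
    by rewrite in_cons mem_cat in_cons; case/orP: yw => ->; rewrite ?orbT.
  have := H y hy.
  by rewrite yx add0n !count_cat /= yx add0n.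
apply: (CS_eq (u := cm (tau (lab x) :: nil, pi_inv tau G1) ++ (G1 ++ G2))).
  rewrite /cm /pi_comm /= pi_invK.
  rewrite tau_inv -!catA.
  have := pi_eq_ctx (lab x :: G1 ++ [:: tau (lab x)]) G2 _ _ (pi_inv_cancel G1).
  by rewrite /= -!catA /=.
by apply: CS_mul => //; exact: CS_comm.
Qed.

End Helpers.

Theorem lemma4p1 (alpha : Type) (tau : alpha -> alpha)
    (tau_inv : forall a, tau (tau a) = a) (g : seq alpha) :
  (exists (A : finType) (lab : A -> alpha) (w : seq A),
      is_nanoword w /\ pi_eq tau (gamma lab tau w) g)
  <-> in_commutator_subgroup tau g.
Proof.
split.
  move=> [A [lab [w [nw H]]]].
  have hc : in_commutator_subgroup tau (gamma lab tau w).
    apply: (@nano_cs _ _ tau_inv _ lab (size w).+1) => //.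
  exact: (CS_eq H hc).
move/(@cs_list _ _ tau_inv) => [l H].
have [A [lab [w [nw gw]]]] := @list_nano _ _ tau_inv l.
by exists A, lab, w; split => //; rewrite gw.
Qed.
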